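(* Let $p$ be an odd prime and $q=2(p-1)$. Let $t\geq 0$ be an integer written as $t=q(c_np^n+\cdots+c_1p+c_0)+c_{-1}$ with $0\leq c_i<p$ for $0\leq i\leq n$ and $0\leq c_{-1}<q$. Let $s_1$ be an integer with $0<s_1<q$. If $c_{-1}>s_1$, then in the May spectral sequence $E_1^{s_1,t,*}=0$.
   Context: The May spectral sequence $\{E_r^{s,t,u},d_r\}$ (for the mod $p$ Steenrod algebra) has $E_1^{*,*,*}=E(h_{i,j}\mid i>0,j\geq 0)\otimes P(b_{i,j}\mid i>0,j\geq 0)\otimes P(a_k\mid k\geq 0)$ ($E$ exterior, $P$ polynomial), with $h_{i,j}\in E_1^{1,2(p^i-1)p^j,2i-1}$, $b_{i,j}\in E_1^{2,2(p^i-1)p^{j+1},p(2i-1)}$, $a_k\in E_1^{1,2p^k-1,2k+1}$. $E_1^{s,t,*}$ denotes the direct sum over all values of the third index. *)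

(* Defs.v *)
From mathcomp Require Import all_boot.
Set Implicit Arguments. Unset Strict Implicit. Unset Printing Implicit Defensive.

(* The E_1-term of the May spectral sequence is
     E(h_{i,j}) (x) P(b_{i,j}) (x) P(a_k)   over F_p,
   a free graded-commutative algebra; as an F_p-vector space it has the basis
   of (canonically ordered) monomials.  E_1^{s,t,*} is the F_p-span of the
   basis monomials of internal bidegree (s,t) (third degree summed over).
   A monomial is recorded by
     - hs : the list of pairs (i,j) with h_{i,j} occurring (exterior: each at
            most once; strictly increasing in lexicographic order),
     - bs : the list of pairs (i,j) of b_{i,j} factors with multiplicity
            (weakly increasing lexicographically),
     - as_: the list of k of a_k factors with multiplicity (weakly increasing),
   with i > 0 for all h_{i,j}, b_{i,j}. *)

Definition lexle (x y : nat * nat) : bool :=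
  (x.1 < y.1) || ((x.1 == y.1) && (x.2 <= y.2)).
Definition lexlt (x y : nat * nat) : bool :=
  (x.1 < y.1) || ((x.1 == y.1) && (x.2 < y.2)).

Record monomial := Monomial {
  hs : seq (nat * nat);
  bs : seq (nat * nat);
  as_ : seq nat }.

Definition canonical_monomial (m : monomial) : bool :=
  [&& all (fun ij => 0 < ij.1) (hs m), all (fun ij => 0 < ij.1) (bs m),
      sorted lexlt (hs m), sorted lexle (bs m) & sorted leq (as_ m)].

Definition sdeg (m : monomial) : nat :=
  size (hs m) + 2 * size (bs m) + size (as_ m).

Definition deg_h (p : nat) (ij : nat * nat) : nat := 2 * (p ^ ij.1 - 1) * p ^ ij.2.
Definition deg_b (p : nat) (ij : nat * nat) : nat := 2 * (p ^ ij.1 - 1) * p ^ ij.2.+1.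
Definition deg_a (p : nat) (k : nat) : nat := 2 * p ^ k - 1.

Definition tdeg (p : nat) (m : monomial) : nat :=
  \sum_(x <- hs m) deg_h p x + \sum_(x <- bs m) deg_b p x + \sum_(k <- as_ m) deg_a p k.

Definition E1_basis (p s t : nat) : Type :=
  { m : monomial | [&& canonical_monomial m, sdeg m == s & tdeg p m == t] }.

Definition E1_vanishes (p s t : nat) : Prop := E1_basis p s t -> False.

(* Main.v *)
Require Import Defs.
From mathcomp Require Import all_boot.
From mathcomp Require Import zify.

Lemma dv_pow (p i : nat) : 0 < p -> (p - 1) %| p ^ i - 1.
Proof.
move=> p0; elim: i => [|i IH]; first by rewrite expn0 subnn dvdn0.
case/dvdnP: IH => k Hk.
have h1 : 0 < p ^ i by rewrite expn_gt0 p0.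
apply/dvdnP; exists (p * k + 1).
rewrite expnS. nia.
Qed.

Lemma sum_h (p : nat) (s : seq (nat * nat)) : 0 < p ->
  2 * (p - 1) %| \sum_(x <- s) deg_h p x.
Proof.
move=> p0; apply: dvdn_sum => x _; rewrite /deg_h.
apply: dvdn_mulr; apply: dvdn_mul => //; exact: dv_pow.
Qed.

Lemma sum_b (p : nat) (s : seq (nat * nat)) : 0 < p ->
  2 * (p - 1) %| \sum_(x <- s) deg_b p x.
Proof.
move=> p0; apply: dvdn_sum => x _; rewrite /deg_b.
apply: dvdn_mulr; apply: dvdn_mul => //; exact: dv_pow.
Qed.

Lemma sum_a (p : nat) (s : seq nat) : 0 < p ->
  exists X, \sum_(k <- s) deg_a p k = 2 * (p - 1) * X + size s.
Proof.
move=> p0; elim: s => [|k s [X HX]]; first by exists 0; rewrite big_nil muln0.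
case/dvdnP: (@dv_pow p k p0) => y Hy.
have h1 : 0 < p ^ k by rewrite expn_gt0 p0.
exists (y + X); rewrite big_cons HX /deg_a /=. nia.
Qed.

Theorem lemma2p2 (p : nat) (hp : prime p) (hodd : odd p)
  (n : nat) (c : nat -> nat) (cm1 t s1 : nat)
  (hc : forall i, i <= n -> c i < p)
  (hcm1 : cm1 < 2 * (p - 1))
  (ht : t = 2 * (p - 1) * (\sum_(i < n.+1) c i * p ^ i) + cm1)
  (hs1 : 0 < s1 < 2 * (p - 1))
  (hgt : s1 < cm1) :
  E1_vanishes p s1 t.
Proof.
move=> [m /and3P [_ /eqP Hs /eqP Ht]].
have p0 : 0 < p by apply: prime_gt0.
case/dvdnP: (@sum_h p (hs m) p0) => x Hx.
case/dvdnP: (@sum_b p (bs m) p0) => y Hy.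
case: (@sum_a p (as_ m) p0) => z Hz.
move: Ht; rewrite /tdeg Hx Hy Hz ht => E.
set q := 2 * (p - 1) in E hcm1 hs1 Hx Hy Hz.
set S := \sum_(i < n.+1) c i * p ^ i in E.
have Ha : size (as_ m) <= s1 by rewrite -Hs /sdeg; lia.
have E2 : q * (x + y + z) + size (as_ m) = q * S + cm1 by lia.
have := congr1 (modn^~ q) E2.
rewrite /= !(mulnC q) !modnMDl !modn_small; lia.
Qed.
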